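(* Let $(X,\mathcal B)$ be any $(K_4-e)$-design of order $11$, and let $D=\{\{x,y\}:\ [x,y,z-u]\in\mathcal B\}$. Then the graph $(X,D)$ is a cycle of length $11$.
   Context: $K_4-e$ is the graph on four vertices $a,b,c,d$ with edges $ab,ac,ad,bc,bd$; it is denoted $[a,b,c-d]$ (so in $[x,y,z-u]$ the vertices $x,y$ have degree $3$, $z,u$ have degree $2$, and $zu$ is the missing edge). A $(K_4-e)$-design of order $v$ is a pair $(X,\mathcal B)$ where $X$ is a set of $v$ vertices and $\mathcal B$ is a collection of copies of $K_4-e$ (called blocks) with vertices in $X$ whose edge sets partition the edge set of the complete graph $K_v$ on $X$. *)

(* Defs.v *)
From mathcomp Require Import all_boot.
Set Implicit Arguments. Unset Strict Implicit. Unset Printing Implicit Defensive.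

(* A copy of K_4 - e, written [x,y,z-u], is the 4-tuple (x,y,z,u) of
   vertices; its edges are xy, xz, xu, yz, yu (zu is missing). *)
Definition block (T : finType) : Type := (T * T * T * T)%type.

Section K4e.
Variable T : finType.

Definition bx (b : block T) : T := b.1.1.1.
Definition by_ (b : block T) : T := b.1.1.2.
Definition bz (b : block T) : T := b.1.2.
Definition bu (b : block T) : T := b.2.

Definition block_ok (b : block T) : bool :=
  uniq [:: bx b; by_ b; bz b; bu b].

Definition block_edges (b : block T) : {set {set T}} :=
  [set [set bx b; by_ b]; [set bx b; bz b]; [set bx b; bu b];
       [set by_ b; bz b]; [set by_ b; bu b]].

Definition K4e_design (B : seq (block T)) : Prop :=
  (forall b, b \in B -> block_ok b) /\
  (forall a c : T, a != c ->
     count (fun b => [set a; c] \in block_edges b) B = 1).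

Definition deg3_pairs (B : seq (block T)) : {set {set T}} :=
  [set [set bx b; by_ b] | b in B].

Definition is_cycle_graph (n : nat) (D : {set {set T}}) : Prop :=
  exists f : 'I_n -> T, bijective f /\
    D = [set [set f i; f (ordS i)] | i : 'I_n].

End K4e.

(* Main.v *)
Require Import Defs.
From mathcomp Require Import all_boot zify.
Set Implicit Arguments. Unset Strict Implicit. Unset Printing Implicit Defensive.

Section Basics.
Variable T : finType.

Lemma set2_eq (a b c d : T) :
  ([set a; b] == [set c; d]) = ((a == c) && (b == d)) || ((a == d) && (b == c)).
Proof.
apply/eqP/idP.
- move=> H.
  have ha : a \in [set c; d] by rewrite -H !inE eqxx.
  have hb : b \in [set c; d] by rewrite -H !inE eqxx orbT.
  have hc : c \in [set a; b] by rewrite H !inE eqxx.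
  have hd : d \in [set a; b] by rewrite H !inE eqxx orbT.
  move: ha hb hc hd; rewrite !inE.
  move=> /orP[]/eqP ha /orP[]/eqP hb /orP[]/eqP hc /orP[]/eqP hd; subst;
  by rewrite ?eqxx ?orbT ?andbT //= ?(eq_sym c d) ?(eq_sym c b) ?(eq_sym d b).
- by case/orP=> /andP [/eqP-> /eqP->] //; rewrite setUC.
Qed.

Lemma count_sum (U : Type) (P : pred U) (s : seq U) : count P s = \sum_(x <- s) P x.
Proof. elim: s => [|x s IH]; first by rewrite big_nil. by rewrite big_cons /= IH. Qed.

Lemma count2 (U : eqType) (P : pred U) (s : seq U) x y :
  x \in s -> y \in s -> x != y -> P x -> P y -> 2 <= count P s.
Proof.
move=> xs ys xy Px Py.
have h := count_predUI (pred1 x) (pred1 y) s.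
have h1 : 0 < count (pred1 x) s by rewrite -has_count; apply/hasP; exists x => //=.
have h2 : 0 < count (pred1 y) s by rewrite -has_count; apply/hasP; exists y => //=.
have h3 : count (predU (pred1 x) (pred1 y)) s <= count P s.
  by apply: sub_count => z /= /orP [] /eqP ->.
have h4 : count (predI (pred1 x) (pred1 y)) s = 0.
  rewrite (eq_count (a2 := pred0)) ?count_pred0 // => z /=.
  by apply/negbTE/negP => /andP[/eqP -> /eqP]; apply/eqP.
lia.
Qed.
End Basics.

Section Arith.
Definition dist3 p q := ((p + 3) %% 8 == q %% 8) || ((q + 3) %% 8 == p %% 8).

Lemma predS_add n k : 0 < k -> (n + k).-1.+1 = n + k.
Proof. lia. Qed.

Lemma no4 i j : [&& j %% 4 != i %% 4, j %% 4 != i.+1 %% 4, j %% 4 != i.+2 %% 4 &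
   j %% 4 != (i + 4).-1 %% 4] = false.
Proof. apply/negP; lia. Qed.

Lemma d3_slot i j : [&& j %% 8 != i %% 8, j %% 8 != i.+1 %% 8, j %% 8 != i.+2 %% 8 &
   j %% 8 != (i + 8).-1 %% 8] -> dist3 i j + dist3 i.+1 j = 1.
Proof. rewrite /dist3; lia. Qed.

Lemma d3_adj i : dist3 i i.+1 = false.
Proof. apply/negP; rewrite /dist3; lia. Qed.

Lemma d3_adj' i : dist3 i.+1 i = false.
Proof. apply/negP; rewrite /dist3; lia. Qed.

Lemma d3_fwd p q n : ((p %% 8 == n %% 8) && (q %% 8 == (n + 3) %% 8)) ||
  ((p %% 8 == (n + 3) %% 8) && (q %% 8 == n %% 8)) -> dist3 p q.
Proof. rewrite /dist3; lia. Qed.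

Lemma d3_bwd p q : (p + 3) %% 8 == q %% 8 -> q %% 8 == (p %% 8 + 3) %% 8.
Proof. lia. Qed.

Lemma d3_inj x y : x < 8 -> y < 8 ->
  ((x %% 8 == y %% 8) && ((x + 3) %% 8 == (y + 3) %% 8)) ||
  ((x %% 8 == (y + 3) %% 8) && ((x + 3) %% 8 == y %% 8)) -> x = y.
Proof. lia. Qed.

Lemma modS11 p : p.+1 %% 11 == ((p %% 11).+1 %% 11) %% 11.
Proof. lia. Qed.

Lemma d3_ne n : n %% 8 != (n + 3) %% 8.
Proof. lia. Qed.
End Arith.

Section Design.
Variable T : finType.
Variable B : seq (block T).
Hypothesis hT : #|T| = 11.
Hypothesis hD : K4e_design B.

Definition el (b : block T) : seq {set T} :=
  [:: [set bx b; by_ b]; [set bx b; bz b]; [set bx b; bu b];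
      [set by_ b; bz b]; [set by_ b; bu b]].

Lemma okP b : b \in B ->
  [/\ bx b != by_ b, bx b != bz b, bx b != bu b, by_ b != bz b &
      (by_ b != bu b /\ bz b != bu b)].
Proof.
move=> /(proj1 hD); rewrite /block_ok /= !inE !negb_or.
by case/and4P => /and3P[-> -> ->] /andP[-> ->] -> _.
Qed.

Lemma el_uniq b : b \in B -> uniq (el b).
Proof.
case/okP => h1 h2 h3 h4 [h5 h6].
have g1 := h1; have g2 := h2; have g3 := h3; have g4 := h4; have g5 := h5; have g6 := h6.
rewrite eq_sym in g1; rewrite eq_sym in g2; rewrite eq_sym in g3.
rewrite eq_sym in g4; rewrite eq_sym in g5; rewrite eq_sym in g6.
rewrite /el /= !inE !set2_eq !eqxx /=.
by rewrite ?(negbTE h1, negbTE h2, negbTE h3, negbTE h4, negbTE h5, negbTE h6,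
  negbTE g1, negbTE g2, negbTE g3, negbTE g4, negbTE g5, negbTE g6).
Qed.

Lemma block_edges_el b : block_edges b =i el b.
Proof. by move=> e; rewrite /block_edges !inE -!orbA. Qed.

Lemma count_edges (E : {set {set T}}) : (forall e, e \in E -> #|e| = 2) ->
  \sum_(b <- B) count (mem E) (el b) = #|E|.
Proof.
move=> hE.
rewrite -sum1_card.
transitivity (\sum_(e in E) \sum_(b <- B) (e \in block_edges b : nat)).
  rewrite exchange_big; apply: eq_big_seq => b bB.
  rewrite count_sum big_uniq ?el_uniq //.
  rewrite big_mkcond [RHS]big_mkcond /=; apply: eq_bigr => e _.
  by rewrite block_edges_el; case: (e \in el b); case: (e \in E).
apply: eq_bigr => e eE.
have /cards2P [a [c [ac ->]]] : #|e| == 2 by rewrite hE.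
by rewrite -count_sum (proj2 hD).
Qed.

Lemma sum32 (X : Type) (s : seq X) (f g : X -> nat) :
  \sum_(x <- s) (3 * f x + 2 * g x) = 3 * \sum_(x <- s) f x + 2 * \sum_(x <- s) g x.
Proof.
elim: s => [|x s IH]; first by rewrite !big_nil.
rewrite !big_cons IH; lia.
Qed.

Lemma sum_const_seq (X : Type) (s : seq X) c : \sum_(x <- s) c = c * size s.
Proof.
elim: s => [|x s IH]; first by rewrite big_nil muln0.
rewrite big_cons IH /=; lia.
Qed.

Definition av v := count (fun b => (bx b == v) || (by_ b == v)) B.
Definition sv v := count (fun b => (bz b == v) || (bu b == v)) B.

Definition Ev (v : T) := [set e : {set T} | (v \in e) && (#|e| == 2)].

Lemma Ev_card v : #|Ev v| = 10.
Proof.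
have -> : Ev v = [set [set v; c] | c in [set~ v]].
  apply/setP => e; rewrite inE; apply/andP/imsetP.
  - case=> ve /cards2P [a [c [ac ee]]].
    move: ve; rewrite ee !inE => /orP [] /eqP va.
      by exists c; rewrite ?inE va // eq_sym.
    by exists a; rewrite ?inE va // setUC.
  - case=> c; rewrite !inE => cv ->; split; first by rewrite !inE eqxx.
    by rewrite cards2 (eq_sym v) cv.
rewrite card_imset ?cardsC1 ?hT //.
move=> c c' /eqP; rewrite set2_eq eqxx /= => /orP [/eqP //|/andP [/eqP <- /eqP //]].
Qed.

Lemma Ev_contrib v b : b \in B ->
  count (mem (Ev v)) (el b) = 3 * ((bx b == v) || (by_ b == v)) + 2 * ((bz b == v) || (bu b == v)).
Proof.
case/okP => h1 h2 h3 h4 [h5 h6].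
rewrite /el /= /Ev !inE !cards2 ?(h1, h2, h3, h4, h5, h6) /= !andbT.
have g1 := h1; have g2 := h2; have g3 := h3; have g4 := h4; have g5 := h5; have g6 := h6.
rewrite eq_sym in g1; rewrite eq_sym in g2; rewrite eq_sym in g3.
rewrite eq_sym in g4; rewrite eq_sym in g5; rewrite eq_sym in g6.
rewrite !(eq_sym v).
case: (eqVneq (bx b) v) => [<-|n1].
  by rewrite ?(negbTE h1, negbTE h2, negbTE h3, negbTE h4, negbTE h5, negbTE h6,
  negbTE g1, negbTE g2, negbTE g3, negbTE g4, negbTE g5, negbTE g6).
case: (eqVneq (by_ b) v) => [<-|n2].
  by rewrite ?(negbTE h1, negbTE h2, negbTE h3, negbTE h4, negbTE h5, negbTE h6,
  negbTE g1, negbTE g2, negbTE g3, negbTE g4, negbTE g5, negbTE g6).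
case: (eqVneq (bz b) v) => [<-|n3].
  by rewrite ?(negbTE h1, negbTE h2, negbTE h3, negbTE h4, negbTE h5, negbTE h6,
  negbTE g1, negbTE g2, negbTE g3, negbTE g4, negbTE g5, negbTE g6).
by case: (eqVneq (bu b) v).
Qed.

Lemma deg_eq v : 3 * av v + 2 * sv v = 10.
Proof.
rewrite -(Ev_card v) -count_edges; last by move=> e; rewrite inE => /andP [_ /eqP].
rewrite /av /sv !count_sum -sum32.
by apply: eq_big_seq => b bB; rewrite Ev_contrib.
Qed.

Lemma sizeB : size B = 11.
Proof.
have h : #|[set e : {set T} | #|e| == 2]| = 55 by rewrite card_draws hT.
rewrite -count_edges in h; last by move=> e; rewrite inE => /eqP.
have : \sum_(b <- B) count (mem [set e : {set T} | #|e| == 2]) (el b) = \sum_(b <- B) 5.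
  apply: eq_big_seq => b bB.
  case/okP: bB => h1 h2 h3 h4 [h5 h6].
  by rewrite /el /= !inE !cards2 ?(h1, h2, h3, h4, h5, h6).
rewrite h sum_const_seq; lia.
Qed.

Lemma sum_av : \sum_v av v = 22.
Proof.
rewrite /av.
under eq_bigr => v _ do rewrite count_sum.
rewrite exchange_big /= (eq_big_seq (fun _ => 2)); first by rewrite sum_const_seq sizeB.
move=> b bB; case/okP: bB => h1 _ _ _ _.
transitivity #|[set bx b; by_ b]|; last by rewrite cards2 h1.
rewrite -sum1_card [RHS]big_mkcond /=.
by apply: eq_bigr => v _; rewrite !inE !(eq_sym v); case: (_ || _).
Qed.

Lemma av2 v : av v = 2.
Proof.
have hle : forall w, av w <= 2 by move=> w; have := deg_eq w; lia.
have h0 : av v = 0 \/ av v = 2 by have := deg_eq v; lia.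
case: h0 => // h0.
have := sum_av; rewrite (bigD1 v) //= h0.
have : \sum_(i | i != v) av i <= \sum_(i | i != v) 2.
  by apply: leq_sum.
rewrite sum_nat_const.
have -> : #|[pred i | i != v]| = 10.
  by rewrite -[RHS]/(11.-1) -hT -(cardC1 v); apply: eq_card => i; rewrite !inE.
lia.
Qed.

Definition adj (v w : T) := has (fun b => [set bx b; by_ b] == [set v; w]) B.

Lemma adj_sym (v w : T) : adj v w = adj w v.
Proof. by rewrite /adj setUC. Qed.

Lemma pair_in_edges (b : block T) : [set bx b; by_ b] \in block_edges b.
Proof. by rewrite !inE eqxx. Qed.

Lemma edge_is_pair (b b' : block T) : b \in B -> b' \in B ->
  [set bx b'; by_ b'] \in block_edges b -> [set bx b'; by_ b'] = [set bx b; by_ b].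
Proof.
move=> bB b'B he; apply/eqP; apply/negP => /negP ne.
have h := count2 (P := fun c => [set bx b'; by_ b'] \in block_edges c) bB b'B.
have bb : b != b' by apply: contraNneq ne => ->.
have := h bb he (pair_in_edges b').
case/okP: b'B => h1 _ _ _ _.
by rewrite (proj2 hD _ _ h1).
Qed.

Lemma adj_irr (v : T) : ~~ adj v v.
Proof.
apply/hasP => -[b bB /eqP e].
case/okP: bB => h1 _ _ _ _.
have hx : bx b \in [set v; v] by rewrite -e !inE eqxx.
have hy : by_ b \in [set v; v] by rewrite -e !inE eqxx orbT.
by move: hx hy h1; rewrite !inE !orbb => /eqP -> /eqP ->; rewrite eqxx.
Qed.

Lemma slot_nadj (b : block T) (p z : T) : b \in B -> (p == bx b) || (p == by_ b) ->
  (z == bz b) || (z == bu b) -> ~~ adj p z.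
Proof.
move=> bB hp hz; apply/hasP => -[b' b'B /eqP e].
have he : [set bx b'; by_ b'] \in block_edges b.
  rewrite e; case/okP: (bB) => h1 h2 h3 h4 [h5 h6].
  by move: hp hz; rewrite !inE => /orP [] /eqP -> /orP [] /eqP ->; rewrite eqxx ?orbT.
have := edge_is_pair bB b'B he; rewrite e => e2.
have : z \in [set bx b; by_ b] by rewrite -e2 !inE eqxx orbT.
case/okP: bB => h1 h2 h3 h4 [h5 h6].
move: hz; rewrite !inE => /orP [] /eqP ->.
  by rewrite (eq_sym _ (bx b)) (negbTE h2) eq_sym (negbTE h4).
by rewrite (eq_sym _ (bx b)) (negbTE h3) eq_sym (negbTE h5).
Qed.

Lemma pair_count (e : {set T}) : count (fun b => [set bx b; by_ b] == e) B <= 1.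
Proof.
case: (boolP (has (fun b => [set bx b; by_ b] == e) B)) => [/hasP [b bB /eqP <-]|].
  apply: (leq_trans (sub_count (a2 := fun c => [set bx b; by_ b] \in block_edges c) _ _)).
    by move=> c /eqP <-; exact: pair_in_edges.
  by case/okP: bB => h1 _ _ _ _; rewrite (proj2 hD _ _ h1).
by rewrite has_count; case: count.
Qed.

Definition other (v : T) (b : block T) := if bx b == v then by_ b else bx b.

Lemma pair_other (v : T) (b : block T) : (bx b == v) || (by_ b == v) -> [set bx b; by_ b] = [set v; other v b].
Proof.
rewrite /other; case: (eqVneq (bx b) v) => [-> //|_ /= /eqP ->].
by rewrite setUC.
Qed.

Lemma set2_inj (v w o : T) : [set v; w] = [set v; o] -> w = o.
Proof.
move/eqP; rewrite set2_eq eqxx /= => /orP [/eqP //|/andP [/eqP <- /eqP //]].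
Qed.

Lemma deg2 (v : T) : exists w1 w2, w1 != w2 /\ forall w, adj v w = (w == w1) || (w == w2).
Proof.
pose P := fun b : block T => (bx b == v) || (by_ b == v).
have hs : size (filter P B) = 2 by rewrite size_filter; exact: av2.
case hf : (filter P B) hs => [|b1 [|b2 [|b3 r]]] // _.
have b1B : P b1 /\ b1 \in B by apply/andP; rewrite -mem_filter hf !inE eqxx.
have b2B : P b2 /\ b2 \in B by apply/andP; rewrite -mem_filter hf !inE eqxx orbT.
exists (other v b1), (other v b2); split.
  apply/negP => /eqP e.
  have := pair_count [set v; other v b1].
  have : count (fun b => [set bx b; by_ b] == [set v; other v b1]) (filter P B) = 2.
    by rewrite hf /= (pair_other (proj1 b1B)) (pair_other (proj1 b2B)) -e !eqxx.
  rewrite count_filter => h2.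
  have : count (predI (fun b => [set bx b; by_ b] == [set v; other v b1]) P) B <=
         count (fun b => [set bx b; by_ b] == [set v; other v b1]) B.
    by apply: sub_count => b /andP [].
  rewrite h2; lia.
move=> w; apply/hasP/idP.
- case=> b bB /eqP e.
  have Pb : P b.
    have : v \in [set bx b; by_ b] by rewrite e !inE eqxx.
    by rewrite /P !inE !(eq_sym v).
  have : b \in filter P B by rewrite mem_filter Pb.
  rewrite hf !inE => /orP [] /eqP eb; subst b; rewrite (pair_other Pb) in e;
    by rewrite (set2_inj (esym e)) eqxx ?orbT.
- case/orP => /eqP ->.
    by exists b1; rewrite ?(proj2 b1B) // (pair_other (proj1 b1B)).
  by exists b2; rewrite ?(proj2 b2B) // (pair_other (proj1 b2B)).
Qed.

Lemma nb_uniq (c p q : T) : adj c p -> adj c q -> p != q ->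
  forall x, adj c x = (x == p) || (x == q).
Proof.
move=> hp hq pq x.
have [w1 [w2 [w12 hw]]] := deg2 c.
rewrite hw; move: hp hq pq; rewrite !hw.
by case/orP => /eqP -> /orP [] /eqP ->; rewrite ?eqxx // orbC.
Qed.

Definition nxt (p c : T) := odflt c [pick w | adj c w && (w != p)].

Lemma nxt_spec (p c : T) : adj c p -> adj c (nxt p c) && (nxt p c != p).
Proof.
move=> hp; rewrite /nxt; case: pickP => [w -> //|none].
have [w1 [w2 [w12 hw]]] := deg2 c.
have h1 := none w1; have h2 := none w2.
rewrite hw eqxx /= in h1; rewrite hw eqxx orbT /= in h2.
move/negbT: h1 => /negbNE/eqP h1; move/negbT: h2 => /negbNE/eqP h2.
by rewrite h1 h2 eqxx in w12.
Qed.

Lemma nxt_uniq (p c q : T) : adj c p -> adj c q -> q != p -> nxt p c = q.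
Proof.
move=> hp hq qp.
case/andP: (nxt_spec hp) => h1 h2.
have pq : p != q by rewrite eq_sym.
move: h1; rewrite (nb_uniq hp hq pq) (negbTE h2) /= => /eqP //.
Qed.

Section Walk.
Variables a a1 : T.
Hypothesis ha : adj a a1.

Fixpoint st (n : nat) : T * T :=
  if n is n'.+1 then let: (p, c) := st n' in (c, nxt p c) else (a, a1).

Definition w n := (st n).1.

Lemma wS n : w n.+1 = (st n).2.
Proof. by rewrite /w /=; case: (st n). Qed.

Lemma wSS n : w n.+2 = nxt (w n) (w n.+1).
Proof. by rewrite wS wS /w /=; case: (st n). Qed.

Lemma w_adj n : adj (w n) (w n.+1).
Proof.
elim: n => [|n IH]; first by rewrite wS.
have h : adj (w n.+1) (w n) by rewrite adj_sym.
by rewrite wSS; case/andP: (nxt_spec h).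
Qed.

Lemma w_nxt n : w n.+2 != w n.
Proof.
have h : adj (w n.+1) (w n) by rewrite adj_sym w_adj.
by rewrite wSS; case/andP: (nxt_spec h).
Qed.

Lemma w_neq n : w n.+1 != w n.
Proof. by apply/eqP => e; have := w_adj n; rewrite e (negbTE (adj_irr _)). Qed.

Definition Prep j := (j < 12) && [exists i : 'I_j, w i == w j].

Lemma rep_ex : exists j, Prep j.
Proof.
case: (boolP [exists i : 'I_12, exists j : 'I_12, (i < j) && (w i == w j)]).
  case/existsP => i /existsP [j /andP [ij e]].
  exists j; apply/andP; split => //; apply/existsP; by exists (Ordinal ij).
move=> hne; exfalso.
have inj : injective (fun i : 'I_12 => w i).
  move=> i j e; case: (ltngtP i j) => h; last exact: val_inj.
    by move: hne; rewrite negb_exists => /forallP /(_ i); rewrite negb_exists =>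
      /forallP /(_ j); rewrite h e eqxx.
  by move: hne; rewrite negb_exists => /forallP /(_ j); rewrite negb_exists =>
      /forallP /(_ i); rewrite h e eqxx.
by have := leq_card _ inj; rewrite card_ord hT.
Qed.

Lemma w0 : w 0 = a. Proof. by []. Qed.
Lemma w1 : w 1 = a1. Proof. by []. Qed.

Lemma cyc : exists k, [/\ 3 <= k <= 11, w k = a,
   (forall i j, i < k -> j < k -> w i = w j -> i = j) & w k.+1 = a1].
Proof.
case: (ex_minnP rep_ex) => j0 /andP [j012 /existsP [i0 /eqP e0]] minj.
have mj : forall i j, i < j -> j < 12 -> w i = w j -> j0 <= j.
  move=> i j ij j12 e; apply: minj; apply/andP; split => //.
  by apply/existsP; exists (Ordinal ij); rewrite /= e.
have hi0 : nat_of_ord i0 = 0.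
  case hi: (nat_of_ord i0) => [|i] //; exfalso.
  have ij : i.+1 < j0 by rewrite -hi ltn_ord.
  rewrite hi in e0.
  pose j := j0.-1.
  have j0E : j0 = j.+1 by rewrite /j; lia.
  have ad : adj (w i.+1) (w j) by rewrite e0 j0E adj_sym w_adj.
  have h1 : adj (w i.+1) (w i) by rewrite adj_sym w_adj.
  have h2 : adj (w i.+1) (w i.+2) by rewrite w_adj.
  move: ad; rewrite (nb_uniq h1 h2 _); last by rewrite eq_sym w_nxt.
  case/orP => /eqP e.
    have := mj i j; rewrite e => /(_ _ _ erefl); lia.
  case: (ltngtP j i.+2) => h.
  - have jE : j = i.+1 by lia.
    by move: (w_neq i.+1); rewrite e0 j0E jE eqxx.
  - have := mj i.+2 j h; rewrite e => /(_ _ erefl); lia.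
  - by move: (w_nxt i.+1); rewrite e0 j0E h eqxx.
rewrite hi0 in e0.
have inj : forall i j, i < j0 -> j < j0 -> w i = w j -> i = j.
  move=> i j ij jj e; case: (ltngtP i j) => // h.
    have j12 : j < 12 by lia.
    by have := mj i j h j12 e; lia.
  have i12 : i < 12 by lia.
  by have := mj j i h i12 (esym e); lia.
have k3 : 3 <= j0.
  have : 0 < j0 by rewrite -hi0 (leq_ltn_trans _ (ltn_ord i0)).
  case: j0 e0 {mj minj j012 inj i0 hi0} => [|[|[|k]]] // e0 _.
    by move: (w_neq 0); rewrite e0 eqxx.
  by move: (w_nxt 0); rewrite e0 eqxx.
exists j0; split => //; first by apply/andP.
pose k := j0.-1.
have j0E : j0 = k.+1 by rewrite /k; lia.
rewrite j0E wSS -j0E -e0 w0.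
apply: nxt_uniq => //.
  by rewrite -w0 e0 j0E adj_sym w_adj.
apply/eqP => e.
have h1k : 1 < j0 by lia.
have hk : k < j0 by lia.
have := inj 1 k h1k hk e; lia.
Qed.

End Walk.

Lemma cycle_of (a : T) : exists k (f : nat -> T), [/\ 3 <= k <= 11, f 0 = a,
  forall n, adj (f n) (f n.+1),
  forall n m, (f n == f m) = (n %% k == m %% k) &
  forall n x, adj (f n) x -> (x == f n.+1) || (x == f (n + k).-1)].
Proof.
have [u1 [u2 [_ hu]]] := deg2 a.
have ha : adj a u1 by rewrite hu eqxx.
have [k [/andP [k3 k11] ek inj ek1]] := cyc ha.
have per : forall n, (w a u1) (n + k) = (w a u1) n.
  suff : forall n, (w a u1) (n + k) = (w a u1) n /\ (w a u1) (n.+1 + k) = (w a u1) n.+1 by move=> h n; case: (h n).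
  elim => [|n [IH1 IH2]]; first by split; rewrite ?add0n ?add1n.
  split => //.
  by rewrite addSn addSn wSS -addSn IH1 IH2 wSS.
have md : forall n, (w a u1) n = (w a u1) (n %% k).
  move=> n; rewrite {1}(divn_eq n k); elim: (n %/ k) => [|q IH]; first by rewrite mul0n add0n.
  have -> : q.+1 * k + n %% k = (q * k + n %% k) + k by rewrite mulSn; lia.
  by rewrite per.
exists k, (w a u1); split => //.
- by apply/andP.
- exact: w_adj.
- move=> n m; rewrite md [(w a u1) m]md.
  have hn : n %% k < k by rewrite ltn_mod; lia.
  have hm : m %% k < k by rewrite ltn_mod; lia.
  apply/eqP/eqP => [e|->] //.
  exact: inj e.
- move=> n x hx.
  pose m := (n + k).-1.
  have mE : n + k = m.+1 by rewrite /m; lia.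
  have h1 : adj (w a u1 (n+k)) (w a u1 m) by rewrite mE adj_sym w_adj.
  have h2 : adj (w a u1 (n+k)) (w a u1 (n+k).+1) by exact: w_adj.
  have h12 : w a u1 m != w a u1 (n+k).+1 by rewrite mE eq_sym w_nxt.
  rewrite per in h1 h2.
  move: hx; rewrite (nb_uniq h1 h2 h12).
  have -> : w a u1 (n+k).+1 = w a u1 n.+1 by rewrite -addSn per.
  by rewrite orbC.
Qed.

Definition closed (S : {set T}) := forall b, b \in B -> (bx b \in S) = (by_ b \in S).

Lemma closedC (S : {set T}) : closed S -> closed (~: S).
Proof. by move=> h b bB; rewrite !inE h. Qed.

Lemma closedD (S1 S2 : {set T}) : closed S1 -> closed S2 -> closed (S1 :\: S2).
Proof. by move=> h1 h2 b bB; rewrite !inE h1 // h2. Qed.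

Lemma adj_closed (S : {set T}) p q : closed S -> adj p q -> (p \in S) = (q \in S).
Proof.
move=> hS /hasP [b bB /eqP e].
move/eqP: e; rewrite set2_eq => /orP [] /andP [/eqP <- /eqP <-]; rewrite hS //.
Qed.

Lemma sum_eq1 (S : {set T}) x : \sum_(v in S) (x == v : nat) = (x \in S).
Proof.
case: (boolP (x \in S)) => xS.
  rewrite (bigD1 x) //= eqxx big1 // => v /andP [_ vx].
  by rewrite eq_sym (negbTE vx).
by rewrite big1 // => v vS; apply/eqP; rewrite eqb0; apply: contraNneq xS => ->.
Qed.

Lemma sum_double (X : Type) (s : seq X) (f : X -> nat) :
  \sum_(x <- s) (f x + f x) = 2 * \sum_(x <- s) f x.
Proof. elim: s => [|x s IH]; first by rewrite !big_nil. rewrite !big_cons IH; lia. Qed.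

Lemma sum12 (X : Type) (s : seq X) (f g : X -> nat) :
  \sum_(x <- s) (f x + 2 * g x) = \sum_(x <- s) f x + 2 * \sum_(x <- s) g x.
Proof. elim: s => [|x s IH]; first by rewrite !big_nil. rewrite !big_cons IH; lia. Qed.

Definition jS (S : {set T}) := count (fun b => bx b \in S) B.
Definition mS (S : {set T}) := \sum_(b <- B | bx b \in S) ((bz b \in S) + (bu b \in S)).

Lemma j_eq (S : {set T}) : closed S -> jS S = #|S|.
Proof.
move=> hS.
have h1 : \sum_(v in S) av v = 2 * #|S|.
  by rewrite (eq_bigr (fun _ => 2)) ?sum_nat_const 1?mulnC // => v _; rewrite av2.
have h2 : \sum_(v in S) av v = 2 * jS S.
  rewrite /av /jS.
  under eq_bigr => v _ do rewrite count_sum.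
  rewrite exchange_big /= count_sum -sum_double.
  apply: eq_big_seq => b bB.
  case/okP: (bB) => hxy _ _ _ _.
  transitivity (\sum_(v in S) ((bx b == v) + (by_ b == v))).
    apply: eq_bigr => v _; case: (eqVneq (bx b) v) => [<-|] //=.
    by rewrite eq_sym (negbTE hxy).
  by rewrite big_split /= !sum_eq1 hS.
lia.
Qed.

Lemma pairs_in (S : {set T}) : closed S -> 'C(#|S|, 2) = jS S + 2 * mS S.
Proof.
move=> hS.
rewrite -cards_draws -count_edges; last by move=> e; rewrite inE => /andP [_ /eqP].
rewrite /mS [in RHS]big_mkcond /jS [in RHS]count_sum -sum12.
apply: eq_big_seq => b bB.
have hxy := hS b bB.
case/okP: (bB) => h1 h2 h3 h4 [h5 h6].
rewrite /el /= !inE !cards2 ?(h1, h2, h3, h4, h5, h6) /= !andbT !subUset !sub1set -hxy.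
by case: (bx b \in S); case: (bz b \in S); case: (bu b \in S).
Qed.

Lemma closed_card (S : {set T}) : closed S -> #|S| \in [:: 0; 3; 4; 7; 8; 11].
Proof.
move=> hS; have := pairs_in hS; rewrite j_eq //.
have : #|S| <= 11 by rewrite -hT max_card.
move: (mS S) => m.
case: #|S| => [|[|[|[|[|[|[|[|[|[|[|[|n]]]]]]]]]]]] //= _; try lia.
all: rewrite bin2 /=; lia.
Qed.

Section Cyc.
Variables (k : nat) (f : nat -> T).
Hypothesis hk : 3 <= k <= 11.
Hypothesis hadj : forall n, adj (f n) (f n.+1).
Hypothesis hmod : forall n m, (f n == f m) = (n %% k == m %% k).
Hypothesis hnb : forall n x, adj (f n) x -> (x == f n.+1) || (x == f (n + k).-1).

Definition C := [set x | [exists i : 'I_k, x == f i]].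

Lemma k0 : 0 < k. Proof. by case/andP: hk => h _; apply: leq_trans h. Qed.

Lemma fmod n : f n = f (n %% k).
Proof. by apply/eqP; rewrite hmod modn_mod. Qed.

Lemma fC n : f n \in C.
Proof.
rewrite inE; apply/existsP; exists (Ordinal (ltn_pmod n k0)).
by rewrite /= -fmod.
Qed.

Lemma Cf x : x \in C -> exists n, x = f n.
Proof. by rewrite inE => /existsP [i /eqP ->]; exists i. Qed.

Lemma card_C : #|C| = k.
Proof.
have -> : C = [set f (nat_of_ord i) | i : 'I_k].
  apply/setP => x; rewrite inE; apply/existsP/imsetP => -[i].
    by move=> /eqP ->; exists i.
  by move=> _ ->; exists i.
rewrite card_imset ?card_ord // => i j /eqP; rewrite hmod !modn_small //.
by move/eqP/val_inj.
Qed.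

Lemma adj_pair (b : block T) : b \in B -> adj (bx b) (by_ b).
Proof. by move=> bB; apply/hasP; exists b. Qed.

Lemma closed_C : closed C.
Proof.
have h : forall p q, adj p q -> p \in C -> q \in C.
  move=> p q hpq /Cf [n e]; rewrite e in hpq.
  by case/orP: (hnb hpq) => /eqP ->; exact: fC.
move=> b bB; apply/idP/idP; first by apply: h; exact: adj_pair.
by apply: h; rewrite adj_sym; exact: adj_pair.
Qed.

Lemma pair_pos (b : block T) : b \in B -> bx b \in C -> exists i,
  ((bx b == f i) && (by_ b == f i.+1)) || ((bx b == f i.+1) && (by_ b == f i)).
Proof.
move=> bB /Cf [n e].
have := hnb (x := by_ b) (n := n); rewrite -e adj_pair // => /(_ isT) /orP [] /eqP ey.
  by exists n; rewrite e ey !eqxx.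
exists (n + k).-1; apply/orP; right; rewrite ey eqxx andbT e.
rewrite predS_add ?k0 //.
by rewrite hmod modnDr.
Qed.

Lemma slot_pos (b : block T) z i j : b \in B -> (z == bz b) || (z == bu b) ->
  ((bx b == f i) && (by_ b == f i.+1)) || ((bx b == f i.+1) && (by_ b == f i)) ->
  z = f j ->
  [&& j %% k != i %% k, j %% k != i.+1 %% k, j %% k != i.+2 %% k & j %% k != (i + k).-1 %% k].
Proof.
move=> bB hz hp ez.
have nx : z != bx b.
  by case/okP: bB => h1 h2 h3 h4 [h5 h6]; case/orP: hz => /eqP ->; rewrite eq_sym.
have ny : z != by_ b.
  by case/okP: bB => h1 h2 h3 h4 [h5 h6]; case/orP: hz => /eqP ->; rewrite eq_sym.
have ax : ~~ adj (bx b) z by apply: (slot_nadj bB) => //; rewrite eqxx.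
have ay : ~~ adj (by_ b) z by apply: (slot_nadj bB) => //; rewrite eqxx orbT.
have [n1 n2 n3 n4] : [/\ f j != f i, f j != f i.+1, ~~ adj (f i) (f j) & ~~ adj (f i.+1) (f j)].
  by case/orP: hp => /andP [/eqP ex /eqP ey]; rewrite -ez -?ex -?ey.
rewrite -!hmod n1 n2 /=.
apply/andP; split.
  by apply: contra n4 => /eqP ->; exact: hadj.
apply: contra n3 => /eqP ->.
have -> : f i = f (i + k).-1.+1.
  rewrite predS_add ?k0 //.
  by apply/eqP; rewrite hmod modnDr.
by rewrite adj_sym; exact: hadj.
Qed.

Lemma not4 : k != 4.
Proof.
apply/eqP => k4.
have hm : mS C = 0.
  apply: big1_seq => b /andP [bxC bB].
  have [i hp] := pair_pos bB bxC.
  have hz : forall z, (z == bz b) || (z == bu b) -> z \in C = false.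
    move=> z hz; apply/negP => /Cf [j ez].
    by have := slot_pos bB hz hp ez; rewrite k4 no4.
  by rewrite (hz (bz b)) ?eqxx // (hz (bu b)) ?eqxx ?orbT.
have := pairs_in closed_C; rewrite (j_eq closed_C) hm card_C k4.
by rewrite bin2.
Qed.

Definition E3 := [set [set f (nat_of_ord n); f (n + 3)] | n : 'I_8].

Lemma E3_mem (k8 : k = 8) p q : ([set f p; f q] \in E3) = dist3 p q.
Proof.
apply/imsetP/idP.
  case=> n _ /eqP; rewrite set2_eq !hmod k8; exact: d3_fwd.
rewrite /dist3 => /orP [] h.
  have lt : p %% 8 < 8 by rewrite ltn_mod.
  exists (Ordinal lt) => //=.
  by congr [set _; _]; apply/eqP; rewrite hmod k8 ?modn_mod // d3_bwd.
have lt : q %% 8 < 8 by rewrite ltn_mod.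
exists (Ordinal lt) => //=; rewrite setUC.
by congr [set _; _]; apply/eqP; rewrite hmod k8 ?modn_mod // d3_bwd.
Qed.

Lemma E3_C (e : {set T}) x : e \in E3 -> x \in e -> x \in C.
Proof. by case/imsetP => n _ -> /set2P [] ->; exact: fC. Qed.

Lemma E3_notin (p q : T) : (p \notin C) || (q \notin C) -> [set p; q] \notin E3.
Proof.
move=> h; apply/negP => hE.
have hp := E3_C hE (x := p); have hq := E3_C hE (x := q).
by move: h; rewrite hp ?hq // !inE eqxx ?orbT.
Qed.

Lemma E3_card (k8 : k = 8) : #|E3| = 8.
Proof.
rewrite card_imset ?card_ord // => n m /eqP; rewrite set2_eq !hmod k8 => h.
apply: val_inj => /=.
exact: d3_inj.
Qed.

Lemma E3_2 (k8 : k = 8) (e : {set T}) : e \in E3 -> #|e| = 2.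
Proof.
case/imsetP => n _ ->; rewrite cards2.
suff -> : f n != f (n + 3) by [].
by rewrite hmod k8 d3_ne.
Qed.

Lemma contrib8 (k8 : k = 8) (b : block T) : b \in B ->
  count (mem E3) (el b) = if bx b \in C then (bz b \in C) + (bu b \in C) else 0.
Proof.
move=> bB.
have cnt : count (mem E3) (el b) = ([set bx b; by_ b] \in E3) +
    (([set bx b; bz b] \in E3) + ([set by_ b; bz b] \in E3)) +
    (([set bx b; bu b] \in E3) + ([set by_ b; bu b] \in E3)).
  rewrite /el /=; lia.
rewrite cnt; case: ifP => hx.
  have [i hp] := pair_pos bB hx.
  have h1 : ([set bx b; by_ b] \in E3) = false.
    by case/orP: (hp) => /andP [/eqP -> /eqP ->]; rewrite E3_mem // ?d3_adj ?d3_adj'.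
  have hs : forall z, (z == bz b) || (z == bu b) ->
      ([set bx b; z] \in E3) + ([set by_ b; z] \in E3) = (z \in C).
    move=> z hz; case: (boolP (z \in C)) => zC.
      case/Cf: (zC) => j ez.
      have := slot_pos bB hz hp ez; rewrite k8 => hc.
      case/orP: (hp) => /andP [/eqP -> /eqP ->]; by rewrite ez !E3_mem // ?(addnC (dist3 i.+1 j)) (d3_slot hc).
    have n1 : [set bx b; z] \notin E3 by apply: E3_notin; apply/orP; right.
    have n2 : [set by_ b; z] \notin E3 by apply: E3_notin; apply/orP; right.
    by rewrite (negbTE n1) (negbTE n2).
  by rewrite h1 hs ?eqxx // hs ?eqxx ?orbT.
have hy : (by_ b \in C) = false by rewrite -(closed_C bB) hx.
have nx : forall q, ([set bx b; q] \in E3) = false.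
  by move=> q; apply/negbTE/E3_notin; rewrite hx.
have ny : forall q, ([set by_ b; q] \in E3) = false.
  by move=> q; apply/negbTE/E3_notin; rewrite hy.
by rewrite !nx !ny.
Qed.

Lemma not8 : k != 8.
Proof.
apply/eqP => k8.
have hm : mS C = 8.
  rewrite -(E3_card k8) -count_edges; last exact: E3_2.
  rewrite /mS big_mkcond; apply: eq_big_seq => b bB.
  by rewrite contrib8.
have := pairs_in closed_C; rewrite (j_eq closed_C) hm card_C k8.
by rewrite bin2.
Qed.

End Cyc.


Lemma cycle_good (a : T) : exists k (f : nat -> T),
  [/\ (k == 3) || (k == 7) || (k == 11), f 0 = a, forall n, adj (f n) (f n.+1),
   forall n m, (f n == f m) = (n %% k == m %% k) &
   [/\ closed (C k f), #|C k f| = k &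
        forall n x, adj (f n) x -> (x == f n.+1) || (x == f (n + k).-1)]].
Proof.
have [k [f [hk f0 hadj hmod hnb]]] := cycle_of a.
have cl := closed_C hk hmod hnb.
have cc := card_C hmod.
exists k, f; split => //.
have := closed_card cl; rewrite cc.
have := not4 hk hadj hmod hnb; have := not8 hk hadj hmod hnb.
move: hk; rewrite !inE; lia.
Qed.

Lemma main : is_cycle_graph 11 (deg3_pairs B).
Proof.
have : 0 < #|T| by rewrite hT.
case/card_gt0P => a0 _.
have [k0 [f0 [hk0 _ hadj0 hmod0 [cl0 cc0 hnb0]]]] := cycle_good a0.
case: (eqVneq k0 11) => [k11|kn11]; last first.
  exfalso.
  pose R := ~: C k0 f0.
  have clR : closed R by apply: closedC.
  have cR : #|R| = 11 - k0 by rewrite -hT -cc0 -(cardsC (C k0 f0)) addKn.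
  have : 0 < #|R| by rewrite cR; move: hk0 kn11; lia.
  case/card_gt0P => w0 wR.
  have [k1 [f1 [hk1 f10 hadj1 hmod1 [cl1 cc1 hnb1]]]] := cycle_good w0.
  have fR : forall n, f1 n \in R.
    elim => [|n IH]; first by rewrite f10.
    by rewrite -(adj_closed clR (hadj1 n)).
  have sub : C k1 f1 \subset R.
    by apply/subsetP => x /Cf [n ->]; exact: fR.
  have le : k1 <= #|R| by rewrite -cc1 subset_leq_card.
  have cD : #|R :\: C k1 f1| = #|R| - k1.
    by rewrite cardsD (setIidPr sub) cc1.
  have := closed_card (closedD clR cl1); rewrite cD cR.
  move: le; rewrite cR; move: hk0 hk1 kn11; rewrite !inE; lia.
pose F := fun i : 'I_11 => f0 i.
have Fmod : forall p, f0 p = f0 (p %% 11).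
  by move=> p; apply/eqP; rewrite hmod0 k11 modn_mod.
have Finj : injective F.
  move=> i j /eqP; rewrite /F hmod0 k11 !modn_small // => /eqP; exact: val_inj.
have Fbij : bijective F by apply: inj_card_bij => //; rewrite card_ord hT.
have hlp : forall p, [set f0 p; f0 p.+1] = [set F (Ordinal (ltn_pmod p (isT : 0 < 11)));
                                           F (ordS (Ordinal (ltn_pmod p (isT : 0 < 11))))].
  move=> p; rewrite /F /=.
  congr [set _; _]; first exact: Fmod.
  by apply/eqP; rewrite hmod0 k11 modS11.
exists F; split => //.
apply/setP => e; apply/imsetP/imsetP.
- case=> b bB ->.
  case: Fbij => g Fg gF.
  have ex : bx b = f0 (g (bx b)) by rewrite -[LHS]gF.
  have ad : adj (f0 (g (bx b))) (by_ b) by rewrite -ex adj_pair.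
  case/orP: (hnb0 _ _ ad) => /eqP ey; rewrite ex ey.
    by eexists; last exact: hlp.
  rewrite k11; set m := (_ + 11).-1.
  have -> : f0 (g (bx b)) = f0 m.+1.
    by rewrite /m (Fmod (_ + 11).-1.+1) predS_add // [RHS]Fmod modnDr -Fmod.
  by rewrite setUC; eexists; last exact: hlp.
- case=> i _ ->.
  have : adj (f0 i) (f0 i.+1) := hadj0 i.
  case/hasP => b bB /eqP eb; exists b => //.
  rewrite eb /F; congr [set _; _].
  by rewrite [RHS]Fmod.
Qed.

End Design.

Theorem lemma3p1 (T : finType) (B : seq (block T)) :
  #|T| = 11 -> K4e_design B -> is_cycle_graph 11 (deg3_pairs B).
Proof. move=> hT hD; exact: main. Qed.
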